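(* Let $d\ge2$, let $\mathcal{G}$ be a strongly maximal stochastic subgroup of $\mathrm{O}(d^2)$, and let $G$ be its orbital germ. Then $\overline{\mathrm{conv}}(G)$ is the unique qplex $Q$ such that $\mathcal{G}=\mathcal{G}(Q)$.
   Context: Fix an integer $d\ge 2$. $\mathrm{O}(d^2)$ is the group of real orthogonal $d^2\times d^2$ matrices. $\langle\cdot,\cdot\rangle$ is the standard inner product on $\mathbb{R}^{d^2}$, $\|\cdot\|$ the Euclidean norm; $\overline{\mathrm{conv}}$ denotes closed convex hull. $\Delta=\{p\in\mathbb{R}^{d^2}: p(i)\ge0,\ \sum_ip(i)=1\}$; $H=\{u\in\mathbb{R}^{d^2}:\sum_i u(i)=1\}$; $c=(1/d^2,\dots,1/d^2)$. For $A\subseteq H$ the polar is $A^*=\{u\in H:\langle u,v\rangle\ge\frac{1}{d(d+1)}\ \forall v\in A\}$. Out-ball $B_{\rm o}=\{u\in H:\|u-c\|\le r_{\rm o}\}$, $r_{\rm o}^2=\frac{d-1}{d^2(d+1)}$. A qplex is a set $Q\subseteq\Delta\cap B_{\rm o}$ with $Q^*=Q$. A measurement is an array $r(i|j)\ge0$ with $\sum_i r(i|j)=1$ for every $j$; for $q\in Q$, $q_r(i)=\sum_j[(d+1)q(j)-\frac1d]r(i|j)$; it is $Q$-preserving if $\{q_r:q\in Q\}=Q$; its stretched measurement matrix is $R_{ij}=(d+1)r(i|j)-\frac1d\sum_k r(i|k)$. The preservation group $\mathcal{G}(Q)$ is the set of stretched measurement matrices of $Q$-preserving measurements. A subgroup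 $\mathcal{G}\subseteq\mathrm{O}(d^2)$ is stochastic if every $R\in\mathcal{G}$ satisfies $R_{ij}\ge-\frac1d$ for all $i,j$ and $Rc=c$. For a stochastic subgroup $\mathcal{G}$ and $R\in\mathcal{G}$ set $s^R_i(j)=\frac{dR_{ij}+1}{d(d+1)}$; the orbital germ of $\mathcal{G}$ is $G=\{s^R_i: R\in\mathcal{G},\ i=1,\dots,d^2\}$. A stochastic subgroup is maximal if it is not contained in any strictly larger stochastic subgroup, and strongly maximal if it is maximal and $\overline{\mathrm{conv}}$ of its orbital germ is a qplex. *)

(* Defs.v *)
From mathcomp Require Import all_boot.
From Stdlib Require Import Reals.
Set Implicit Arguments. Unset Strict Implicit.
Open Scope R_scope.

(* index set {1..d^2} ~ 'I_(d*d) *)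
Definition vec (d : nat) := 'I_(d * d)%nat -> R.
Definition mat (d : nat) := 'I_(d * d)%nat -> 'I_(d * d)%nat -> R.

Definition sumI (n : nat) (F : 'I_n -> R) : R := \big[Rplus/0]_(i < n) F i.

Definition inner (d : nat) (u v : vec d) : R := sumI (fun i => u i * v i).
Definition vnorm (d : nat) (u : vec d) : R := sqrt (inner u u).
Definition vsub (d : nat) (u v : vec d) : vec d := fun i => u i - v i.

Definition dR (d : nat) : R := INR d.

Definition cvec (d : nat) : vec d := fun _ => 1 / (dR d * dR d).
Arguments cvec d : clear implicits.

Definition Simplex (d : nat) (p : vec d) : Prop :=
  (forall i, 0 <= p i) /\ sumI p = 1.

Definition Hplane (d : nat) (u : vec d) : Prop := sumI u = 1.

Definition polar (d : nat) (A : vec d -> Prop) : vec d -> Prop :=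
  fun u => Hplane u /\
    forall v, A v -> inner u v >= 1 / (dR d * (dR d + 1)).

Definition r_out (d : nat) : R :=
  sqrt ((dR d - 1) / (dR d * dR d * (dR d + 1))).

Definition OutBall (d : nat) (u : vec d) : Prop :=
  Hplane u /\ vnorm (vsub u (cvec d)) <= r_out d.

Definition qplex (d : nat) (Q : vec d -> Prop) : Prop :=
  (forall q, Q q -> Simplex q /\ OutBall q) /\
  (forall u, polar Q u <-> Q u).

(* measurements: r i j = r(i|j) *)
Definition measurement (d : nat) (r : mat d) : Prop :=
  (forall i j, 0 <= r i j) /\ (forall j, sumI (fun i => r i j) = 1).

Definition meas_apply (d : nat) (r : mat d) (q : vec d) : vec d :=
  fun i => sumI (fun j => ((dR d + 1) * q j - 1 / dR d) * r i j).

Definition Q_preserving (d : nat) (Q : vec d -> Prop) (r : mat d) : Prop :=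
  forall u, (exists q, Q q /\ u = meas_apply r q) <-> Q u.

Definition stretched (d : nat) (r : mat d) : mat d :=
  fun i j => (dR d + 1) * r i j - (1 / dR d) * sumI (fun k => r i k).

Definition pres_group (d : nat) (Q : vec d -> Prop) : mat d -> Prop :=
  fun M => exists r, measurement r /\ Q_preserving Q r /\ M = stretched r.

Definition mmul (d : nat) (A B : mat d) : mat d :=
  fun i k => sumI (fun j => A i j * B j k).
Definition mtr (d : nat) (A : mat d) : mat d := fun i j => A j i.
Definition mid (d : nat) : mat d := fun i j => if i == j then 1 else 0.
Arguments mid d : clear implicits.

Definition orthogonal (d : nat) (M : mat d) : Prop := mmul M (mtr M) = mid d.

Definition subgroupO (d : nat) (S : mat d -> Prop) : Prop :=
  (forall M, S M -> orthogonal M) /\ S (mid d) /\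
  (forall A B, S A -> S B -> S (mmul A B)) /\
  (forall A, S A -> S (mtr A)).

Definition stochastic (d : nat) (S : mat d -> Prop) : Prop :=
  subgroupO S /\
  forall M, S M ->
    (forall i j, M i j >= - (1 / dR d)) /\
    (forall i, sumI (fun j => M i j * cvec d j) = cvec d i).

Definition orbital_germ (d : nat) (S : mat d -> Prop) : vec d -> Prop :=
  fun s => exists M i, S M /\
    s = (fun j => (dR d * M i j + 1) / (dR d * (dR d + 1))).

Definition maximal_stochastic (d : nat) (S : mat d -> Prop) : Prop :=
  stochastic S /\
  forall S' : mat d -> Prop, stochastic S' ->
    (forall M, S M -> S' M) -> (forall M, S' M -> S M).

Definition conv (d : nat) (A : vec d -> Prop) : vec d -> Prop :=
  fun u => exists (k : nat) (w : 'I_k -> R) (x : 'I_k -> vec d),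
    (forall t, 0 <= w t /\ A (x t)) /\ sumI w = 1 /\
    u = (fun i => sumI (fun t => w t * x t i)).

Definition closure (d : nat) (A : vec d -> Prop) : vec d -> Prop :=
  fun u => forall eps, eps > 0 -> exists v, A v /\ vnorm (vsub u v) < eps.

Definition clconv (d : nat) (A : vec d -> Prop) : vec d -> Prop :=
  closure (conv A).

Definition strongly_maximal (d : nat) (S : mat d -> Prop) : Prop :=
  maximal_stochastic S /\ qplex (clconv (orbital_germ S)).

(* Main.v *)
Require Import Defs.
From mathcomp Require Import all_boot all_algebra.
From Stdlib Require Import Reals Lra FunctionalExtensionality.
From mathcomp Require Import Rstruct.
Open Scope R_scope.
Set Implicit Arguments. Unset Strict Implicit.

Lemma sumI_ext n (F G : 'I_n -> R) : (forall i, F i = G i) -> sumI F = sumI G.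
Proof. by move=> H; rewrite /sumI; apply: eq_bigr => i _; apply: H. Qed.

Lemma sumI_add n (F G : 'I_n -> R) : sumI (fun i => F i + G i) = sumI F + sumI G.
Proof. by rewrite /sumI big_split. Qed.

Lemma sumI_scal n a (F : 'I_n -> R) : sumI (fun i => a * F i) = a * sumI F.
Proof. by rewrite /sumI big_distrr. Qed.

Lemma sumI_lin n a b (F G : 'I_n -> R) :
  sumI (fun i => a * F i + b * G i) = a * sumI F + b * sumI G.
Proof. by rewrite sumI_add !sumI_scal. Qed.

Lemma sumI_const n a : sumI (fun _ : 'I_n => a) = INR n * a.
Proof.
rewrite /sumI; elim: n => [|n IH]; first by rewrite big_ord0 /=; ring.
rewrite big_ord_recr /= IH; change (INR n * a + a = INR (S n) * a); rewrite S_INR; ring.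
Qed.

Lemma sumI_swap n m (F : 'I_n -> 'I_m -> R) :
  sumI (fun i => sumI (fun j => F i j)) = sumI (fun j => sumI (fun i => F i j)).
Proof. by rewrite /sumI exchange_big. Qed.

Lemma sumI_le n (F G : 'I_n -> R) : (forall i, F i <= G i) -> sumI F <= sumI G.
Proof.
move=> H; rewrite /sumI; elim/big_ind2: _ => //; first lra.
move=> *; lra.
Qed.

Lemma sumI_ge0 n (F : 'I_n -> R) : (forall i, 0 <= F i) -> 0 <= sumI F.
Proof.
move=> H; have := sumI_le (F := fun _ => 0) (G := F) H.
by rewrite sumI_const; lra.
Qed.

Lemma sumI_D1 n (F : 'I_n -> R) i : sumI F = F i + sumI (fun j => if j == i then 0 else F j).
Proof.
rewrite /sumI (bigD1 i) //=; congr (_ + _).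
rewrite [RHS](bigD1 i) //= eqxx Rplus_0_l; apply: eq_bigr => j /negbTE ->. by [].
Qed.

Lemma sumI_eq0 n (F : 'I_n -> R) : (forall i, 0 <= F i) -> sumI F = 0 -> forall i, F i = 0.
Proof.
move=> H0 Hs i; move: Hs; rewrite (sumI_D1 F i).
have : 0 <= sumI (fun j => if j == i then 0 else F j).
  apply: sumI_ge0 => j; case: (j == i) => //; lra.
have := H0 i; lra.
Qed.

Lemma sumI_delta n (F : 'I_n -> R) i :
  sumI (fun j => (if i == j then 1 else 0) * F j) = F i.
Proof.
rewrite (sumI_D1 _ i) eqxx.
rewrite (sumI_ext (G := fun _ => 0)); first by rewrite sumI_const; ring.
move=> j /=; case E: (j == i) => //; rewrite eq_sym E; ring.
Qed.

Definition mv d (M : mat d) (x : vec d) : vec d := fun i => sumI (fun j => M i j * x j).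
Definition rowsum d (M : mat d) i := sumI (M i).
Definition colsum d (M : mat d) j := sumI (fun i => M i j).
Definition gp d (M : mat d) i : vec d := fun j => (dR d * M i j + 1) / (dR d * (dR d + 1)).

Lemma INR_dd d : INR (d * d)%nat = dR d * dR d.
Proof. by rewrite /dR -mult_INR. Qed.

Lemma mv_mmul d (A B : mat d) x : mv A (mv B x) = mv (mmul A B) x.
Proof.
apply: functional_extensionality => i; rewrite /mv /mmul /sumI.
transitivity (\big[Rplus/0]_(j < d * d) \big[Rplus/0]_(k < d * d) (A i j * (B j k * x k))).
  by apply: eq_bigr => j _; rewrite big_distrr.
rewrite exchange_big; apply: eq_bigr => k _; rewrite big_distrl /=.
by apply: eq_bigr => j _; ring.
Qed.

Lemma mv_mid d (x : vec d) : mv (mid d) x = x.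
Proof. by apply: functional_extensionality => i; rewrite /mv /mid sumI_delta. Qed.

Lemma inner_sym d (u v : vec d) : inner u v = inner v u.
Proof. by apply: sumI_ext => i; ring. Qed.

Lemma inner_mv_tr d (M : mat d) x y : inner (mv (mtr M) x) y = inner x (mv M y).
Proof.
rewrite /inner /mv /mtr /sumI.
transitivity (\big[Rplus/0]_(j < d * d) \big[Rplus/0]_(i < d * d) (x i * (M i j * y j))).
  apply: eq_bigr => j _; rewrite big_distrl /=; apply: eq_bigr => i _; ring.
rewrite exchange_big; apply: eq_bigr => i _; by rewrite big_distrr.
Qed.

Lemma mv_lin d (M : mat d) a b x y :
  mv M (fun j => a * x j + b * y j) = fun i => a * mv M x i + b * mv M y i.
Proof.
apply: functional_extensionality => i; rewrite /mv -sumI_lin.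
by apply: sumI_ext => j; ring.
Qed.

Lemma inner_lin d a b (x y v : vec d) :
  inner (fun j => a * x j + b * y j) v = a * inner x v + b * inner y v.
Proof. by rewrite /inner -sumI_lin; apply: sumI_ext => j; ring. Qed.

Lemma sum_mv d (M : mat d) x : sumI (mv M x) = sumI (fun j => colsum M j * x j).
Proof.
rewrite /mv /colsum sumI_swap; apply: sumI_ext => j.
by rewrite /sumI big_distrl.
Qed.

Lemma inner_gp d (M : mat d) i q :
  inner (gp M i) q = (dR d * mv M q i + sumI q) / (dR d * (dR d + 1)).
Proof.
rewrite /inner /gp (sumI_ext (G := fun j => (dR d / (dR d * (dR d+1))) * (M i j * q j)
   + (1/(dR d*(dR d+1))) * q j)); last by move=> j; rewrite /Rdiv; ring.
rewrite sumI_lin /mv /Rdiv; ring.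
Qed.

Lemma sum_gp d (M : mat d) i :
  sumI (gp M i) = (dR d * rowsum M i + dR d * dR d) / (dR d * (dR d + 1)).
Proof.
rewrite /gp (sumI_ext (G := fun j => (dR d / (dR d * (dR d+1))) * M i j
   + (1/(dR d*(dR d+1))) * 1)); last by move=> j; rewrite /Rdiv; ring.
rewrite sumI_lin sumI_const INR_dd /rowsum /Rdiv; ring.
Qed.

Lemma mv_gp_mid d (M : mat d) j i :
  mv M (gp (mid d) j) i = (dR d * M i j + rowsum M i) / (dR d * (dR d + 1)).
Proof.
have -> : M i j = sumI (fun l => (if j == l then 1 else 0) * M i l) by rewrite sumI_delta.
rewrite /mv /gp (sumI_ext (G := fun l => (dR d / (dR d * (dR d+1))) * ((if j == l then 1 else 0) * M i l)
   + (1/(dR d*(dR d+1))) * M i l)); last by move=> l; rewrite /mid /Rdiv; ring.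
rewrite sumI_lin /rowsum /Rdiv; ring.
Qed.

Lemma mv_gp d (M N : mat d) i : (forall k, rowsum M k = 1) ->
  mv M (gp N i) = gp (mmul N (mtr M)) i.
Proof.
move=> HM; apply: functional_extensionality => k.
transitivity ((dR d * mmul N (mtr M) i k + rowsum M k)/(dR d*(dR d+1))); last by rewrite HM.
rewrite /gp /mv (sumI_ext (G := fun j => (dR d / (dR d * (dR d+1))) * (N i j * M k j)
   + (1/(dR d*(dR d+1))) * M k j)); last by move=> j; rewrite /Rdiv; ring.
rewrite sumI_lin /mmul /mtr /rowsum /Rdiv; ring.
Qed.

Lemma rowsum_mid d k : rowsum (mid d) k = 1.
Proof.
rewrite /rowsum (sumI_ext (G := fun j => (if k == j then 1 else 0) * 1)).
  exact: (sumI_delta (fun _ => 1) k).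
by move=> j; rewrite /mid; ring.
Qed.

Lemma sum_cvec d : 2 <= dR d -> sumI (cvec d) = 1.
Proof.
move=> hD; rewrite /cvec sumI_const INR_dd; field; lra.
Qed.

Lemma inner_cvec d v : inner (cvec d) v = sumI v / (dR d * dR d).
Proof.
transitivity (sumI (fun j => (1/(dR d*dR d)) * v j)).
  by apply: sumI_ext => j; rewrite /cvec; ring.
rewrite sumI_scal /Rdiv; ring.
Qed.

Lemma inner_vsub d (u v : vec d) :
  inner (vsub u v) (vsub u v) = inner u u - 2 * inner u v + inner v v.
Proof.
rewrite /inner /vsub (sumI_ext (G := fun i => (1 * (u i * u i) + (-2) * (u i * v i)) + 1 * (v i * v i))); last by move=> i /=; ring.
rewrite sumI_add sumI_lin sumI_scal; ring.
Qed.

Lemma inner_ge0 d (u : vec d) : 0 <= inner u u.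
Proof. apply: sumI_ge0 => i; nra. Qed.

Lemma D_ge2 d : (2 <= d)%nat -> 2 <= dR d.
Proof.
move=> h; rewrite /dR; replace 2 with (INR 2) by (simpl; lra).
by apply: le_INR; apply/leP.
Qed.

Lemma div_mono a b X : 0 < X -> a <= b -> a / X <= b / X.
Proof.
move=> hX hab; rewrite /Rdiv; apply: Rmult_le_compat_r => //.
by left; apply: Rinv_0_lt_compat.
Qed.

Lemma div_ge0 a b : 0 <= a -> 0 < b -> 0 <= a / b.
Proof. move=> ha hb; apply: Rmult_le_pos => //; left; exact: Rinv_0_lt_compat. Qed.

Lemma qp_simplex d (Q : vec d -> Prop) q : qplex Q -> Q q -> (forall i, 0 <= q i) /\ sumI q = 1.
Proof. by move=> [H1 _] /H1 [[]]. Qed.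

Lemma qp_polar d (Q : vec d -> Prop) u : qplex Q -> Q u -> polar Q u.
Proof. by move=> [_ H2] /H2. Qed.

Lemma qp_of_polar d (Q : vec d -> Prop) u : qplex Q -> polar Q u -> Q u.
Proof. by move=> [_ H2] /H2. Qed.

Lemma qp_inner d (Q : vec d -> Prop) u v : qplex Q -> Q u -> Q v ->
  1 / (dR d * (dR d + 1)) <= inner u v.
Proof. by move=> hQ /(qp_polar hQ) [_ H] /H; apply: Rge_le. Qed.

Lemma qp_norm d (Q : vec d -> Prop) q : 2 <= dR d -> qplex Q -> Q q ->
  inner q q <= 2 / (dR d * (dR d + 1)).
Proof.
move=> hD hQ Hq; have [_ Hs] := qp_simplex hQ Hq.
have [_ [_ Hb]] := (proj1 hQ) q Hq.
move: Hb; rewrite /vnorm /r_out => Hb.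
apply sqrt_le_0 in Hb; last first.
- apply: div_ge0; [lra|]. apply: Rmult_lt_0_compat; [nra|lra].
- exact: inner_ge0.
move: Hb; rewrite inner_vsub (inner_sym q (cvec d)) !inner_cvec Hs sum_cvec //.
have E : (dR d - 1) / (dR d * dR d * (dR d + 1)) + 1 / (dR d * dR d) = 2 / (dR d * (dR d + 1)).
  field; lra.
have E2 : 2 * (1 / (dR d * dR d)) = 1 / (dR d * dR d) + 1 / (dR d * dR d) by field; lra.
lra.
Qed.

Lemma qp_inner_le d (Q : vec d -> Prop) u v : 2 <= dR d -> qplex Q -> Q u -> Q v ->
  inner u v <= 2 / (dR d * (dR d + 1)).
Proof.
move=> hD hQ Hu Hv; have := inner_ge0 (vsub u v); rewrite inner_vsub.
have := qp_norm hD hQ Hu; have := qp_norm hD hQ Hv; lra.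
Qed.

Lemma gp_mid_in d (Q : vec d -> Prop) k : 2 <= dR d -> qplex Q -> Q (gp (mid d) k).
Proof.
move=> hD hQ; apply: (qp_of_polar hQ); split.
  by rewrite /Hplane sum_gp rowsum_mid; field; lra.
move=> q Hq; apply: Rle_ge; rewrite inner_gp mv_mid.
have [H0 ->] := qp_simplex hQ Hq.
apply: div_mono; [nra|]. have := H0 k; nra.
Qed.

Lemma gp_mid_self d k : 2 <= dR d ->
  inner (gp (mid d) k) (gp (mid d) k) = 2 / (dR d * (dR d + 1)).
Proof.
move=> hD; rewrite inner_gp mv_mid sum_gp rowsum_mid /gp /mid eqxx.
field; lra.
Qed.

Definition hc d (q : vec d) : vec d :=
  fun j => (dR d / (dR d - 1)) * cvec d j + (-1 / (dR d - 1)) * q j.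

Lemma hc_in d (Q : vec d -> Prop) q : 2 <= dR d -> qplex Q -> Q q -> Q (hc q).
Proof.
move=> hD hQ Hq; apply: (qp_of_polar hQ); have [_ Hs] := qp_simplex hQ Hq; split.
  rewrite /Hplane /hc sumI_lin Hs sum_cvec //; field; lra.
move=> v Hv; apply: Rle_ge; rewrite /hc inner_lin inner_cvec.
have [_ Hsv] := qp_simplex hQ Hv; rewrite Hsv.
have := qp_inner_le hD hQ Hq Hv; set X := inner q v => HX.
have E : dR d / (dR d - 1) * (1 / (dR d * dR d)) + -1 / (dR d - 1) * X - 1 / (dR d * (dR d + 1))
   = (2 / (dR d * (dR d + 1)) - X) / (dR d - 1) by field; lra.
have : 0 <= (2 / (dR d * (dR d + 1)) - X) / (dR d - 1).
  apply: div_ge0; lra.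
lra.
Qed.

Lemma K1 d (r : mat d) q : sumI q = 1 -> meas_apply r q = mv (stretched r) q.
Proof.
move=> Hq; apply: functional_extensionality => i.
rewrite /meas_apply /mv /stretched.
rewrite (sumI_ext (F := fun j => ((dR d + 1) * q j - 1 / dR d) * r i j)
  (G := fun j => (dR d + 1) * (r i j * q j) + (- (1 / dR d)) * r i j)); last by move=> j; ring.
rewrite (sumI_ext (F := fun j => ((dR d + 1) * r i j - 1 / dR d * sumI (fun k => r i k)) * q j)
  (G := fun j => (dR d + 1) * (r i j * q j) + (- (1 / dR d) * sumI (fun k => r i k)) * q j)); last by move=> j; ring.
rewrite !sumI_lin Hq.
change (sumI (fun k => r i k)) with (sumI (r i)); ring.
Qed.

Lemma K3 d (r : mat d) i : 2 <= dR d -> rowsum (stretched r) i = sumI (r i).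
Proof.
move=> hD; rewrite /rowsum /stretched.
rewrite (sumI_ext (G := fun j => (dR d + 1) * r i j + (- (1 / dR d) * sumI (fun k => r i k)) * 1)); last by move=> j; ring.
rewrite sumI_lin sumI_const INR_dd; change (sumI (fun k => r i k)) with (sumI (r i)).
field; lra.
Qed.

Lemma K2 d (r : mat d) j : 2 <= dR d -> measurement r -> colsum (stretched r) j = 1.
Proof.
move=> hD [_ Hr]; rewrite /colsum /stretched.
rewrite (sumI_ext (G := fun i => (dR d + 1) * r i j + (- (1 / dR d)) * sumI (fun k => r i k))); last by move=> i; ring.
rewrite sumI_lin Hr sumI_swap.
rewrite (sumI_ext (G := fun _ => 1)); last by move=> k; apply: Hr.
rewrite sumI_const INR_dd; field; lra.
Qed.

Lemma mv_e d (M : mat d) k i : mv M (fun j => mid d k j) i = M i k.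
Proof.
rewrite /mv -(sumI_delta (fun j => M i j) k); apply: sumI_ext => j; rewrite /mid; ring.
Qed.

Lemma mv_cvec d (M : mat d) k : mv M (cvec d) k = rowsum M k / (dR d * dR d).
Proof.
transitivity (sumI (fun j => (1/(dR d*dR d)) * M k j)).
  by apply: sumI_ext => j; rewrite /cvec; ring.
rewrite sumI_scal /rowsum /Rdiv; ring.
Qed.

Lemma sum_rowsum d (M : mat d) : sumI (rowsum M) = sumI (colsum M).
Proof. by rewrite /rowsum /colsum sumI_swap. Qed.

Lemma colsum_tr d (M : mat d) j : colsum (mtr M) j = rowsum M j.
Proof. by []. Qed.

Lemma rowsum_tr d (M : mat d) j : rowsum (mtr M) j = colsum M j.
Proof. by []. Qed.

Lemma sum_mv1 d (M : mat d) x : (forall j, colsum M j = 1) -> sumI (mv M x) = sumI x.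
Proof. by move=> H; rewrite sum_mv; apply: sumI_ext => j; rewrite H; ring. Qed.

Lemma pres_into d (Q : vec d -> Prop) r q : qplex Q -> Q_preserving Q r -> Q q ->
  Q (mv (stretched r) q).
Proof.
move=> hQ hP Hq; have [_ Hs] := qp_simplex hQ Hq.
rewrite -K1 //; apply/hP; by exists q.
Qed.

Lemma pres_onto d (Q : vec d -> Prop) r u : qplex Q -> Q_preserving Q r -> Q u ->
  exists q, Q q /\ u = mv (stretched r) q.
Proof.
move=> hQ hP /hP [q [Hq ->]]; exists q; split => //.
have [_ Hs] := qp_simplex hQ Hq; by rewrite K1.
Qed.

Lemma pres_rowsum d (Q : vec d -> Prop) r k : (2 <= d)%nat -> qplex Q -> measurement r ->
  Q_preserving Q r -> rowsum (stretched r) k = 1.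
Proof.
move=> hd hQ hr hP; have hD := D_ge2 hd.
set R := stretched r.
have HC : forall j, colsum R j = 1 by move=> j; apply: K2.
have Hge : forall k, 1 <= rowsum R k.
  move=> k0.
  have [q [Hq Hsk]] := pres_onto hQ hP (gp_mid_in k0 hD hQ).
  have Hw := pres_into hQ hP (hc_in hD hQ Hq).
  have := qp_inner hQ Hw (gp_mid_in k0 hD hQ).
  rewrite /hc mv_lin -/R -Hsk inner_lin gp_mid_self //.
  rewrite (inner_sym (mv R (cvec d))) inner_gp mv_mid sum_mv1 // sum_cvec // mv_cvec.
  set s := rowsum R k0 => H.
  have E : dR d / (dR d - 1) * ((dR d * (s / (dR d * dR d)) + 1) / (dR d * (dR d + 1))) +
      -1 / (dR d - 1) * (2 / (dR d * (dR d + 1))) - 1 / (dR d * (dR d + 1))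
      = (s - 1) / ((dR d - 1) * dR d * (dR d + 1)) by field; lra.
  have P : 0 < (dR d - 1) * dR d * (dR d + 1) by apply: Rmult_lt_0_compat; [nra|lra].
  have : 0 <= (s - 1) / ((dR d - 1) * dR d * (dR d + 1)) by lra.
  move=> H1; have := Rmult_le_pos _ _ H1 (Rlt_le _ _ P).
  have -> : (s - 1) / ((dR d - 1) * dR d * (dR d + 1)) * ((dR d - 1) * dR d * (dR d + 1)) = s - 1
    by field; lra.
  lra.
have Hsum : sumI (fun k => 1 * rowsum R k + (-1) * 1) = 0.
  rewrite sumI_lin sum_rowsum (sumI_ext (F := colsum R) (G := fun _ => 1)) //.
  by rewrite sumI_const; ring.
have H0 : forall i, 0 <= 1 * rowsum R i + (-1) * 1 by move=> i; have := Hge i; lra.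
have := sumI_eq0 H0 Hsum k; lra.
Qed.

Lemma pres_entries d (Q : vec d -> Prop) r i j : (2 <= d)%nat -> qplex Q -> measurement r ->
  Q_preserving Q r -> -(1 / dR d) <= stretched r i j.
Proof.
move=> hd hQ hr hP; have hD := D_ge2 hd.
have H1 := pres_rowsum i hd hQ hr hP; rewrite K3 // in H1.
rewrite /stretched; change (sumI (fun k => r i k)) with (sumI (r i)); rewrite H1.
have := (proj1 hr) i j; nra.
Qed.

Lemma tr_into d (Q : vec d -> Prop) M : 2 <= dR d -> qplex Q -> (forall j, rowsum M j = 1) ->
  (forall q, Q q -> Q (mv M q)) -> forall w, Q w -> Q (mv (mtr M) w).
Proof.
move=> hD hQ HR Hin w Hw; apply: (qp_of_polar hQ); split.
  rewrite /Hplane sum_mv1; first by have [] := qp_simplex hQ Hw.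
  by move=> j; rewrite colsum_tr.
move=> q Hq; apply: Rle_ge; rewrite inner_mv_tr; apply: (qp_inner hQ Hw); exact: Hin.
Qed.

Definition one d : vec d := fun _ => 1.
Arguments one d : clear implicits.

Lemma mv_one d (M : mat d) : (forall i, rowsum M i = 1) -> mv M (one d) = one d.
Proof.
move=> H; apply: functional_extensionality => i.
transitivity (rowsum M i); last by rewrite H.
by rewrite /mv /one /rowsum; apply: sumI_ext => j; ring.
Qed.

Lemma orth_of d (Q : vec d -> Prop) M : 2 <= dR d -> qplex Q ->
  (forall i, rowsum M i = 1) -> (forall j, colsum M j = 1) ->
  (forall q, Q q -> Q (mv M q)) -> (forall u, Q u -> exists q, Q q /\ u = mv M q) ->
  mmul M (mtr M) = mid d.
Proof.
move=> hD hQ HR HC Hin Hon.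
have Hk : forall k, mv M (mv (mtr M) (gp (mid d) k)) = gp (mid d) k.
  move=> k; have Hs := gp_mid_in k hD hQ.
  have Hz := tr_into hD hQ HR Hin Hs.
  have [q [Hq Eq]] := Hon _ Hs.
  suff -> : mv (mtr M) (gp (mid d) k) = q by [].
  have Hzq : inner (mv (mtr M) (gp (mid d) k)) q = 2 / (dR d * (dR d + 1)).
    by rewrite inner_mv_tr -Eq gp_mid_self.
  have H0 := inner_ge0 (vsub (mv (mtr M) (gp (mid d) k)) q).
  have := qp_norm hD hQ Hz; have := qp_norm hD hQ Hq.
  rewrite inner_vsub Hzq in H0.
  move=> h1 h2.
  have Hz0 : inner (vsub (mv (mtr M) (gp (mid d) k)) q) (vsub (mv (mtr M) (gp (mid d) k)) q) = 0.
    rewrite inner_vsub Hzq; lra.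
  apply: functional_extensionality => i.
  have := sumI_eq0 (fun j => Rle_0_sqr _) Hz0 i.
  rewrite /vsub /Rsqr => Hi; nra.
have Hm : forall k, mv M (mv (mtr M) (fun j => mid d k j)) = (fun j => mid d k j).
  move=> k.
  have E : (fun j => mid d k j) = (fun j => (dR d + 1) * gp (mid d) k j + (- (1 / dR d)) * one d j).
    apply: functional_extensionality => j; rewrite /gp /one; field; lra.
  rewrite E mv_lin mv_lin Hk.
  rewrite (mv_one (M := mtr M)); last by move=> i; rewrite rowsum_tr.
  by rewrite mv_one.
apply: functional_extensionality => i; apply: functional_extensionality => k.
rewrite -mv_e -mv_mmul Hm /mid eq_sym //.
Qed.

Lemma div_ge0_inv X P : 0 < P -> 0 <= X / P -> 0 <= X.
Proof.
move=> hP h; have := Rmult_le_pos _ _ h (Rlt_le _ _ hP).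
have -> : X / P * P = X by field; lra.
done.
Qed.

Lemma inG d (Q : vec d -> Prop) M : (2 <= d)%nat -> qplex Q ->
  (forall i, rowsum M i = 1) -> (forall j, colsum M j = 1) ->
  (forall q, Q q -> Q (mv M q)) -> (forall u, Q u -> exists q, Q q /\ u = mv M q) ->
  pres_group Q M.
Proof.
move=> hd hQ HR HC Hin Hon; have hD := D_ge2 hd.
have Hent : forall i j, 0 <= dR d * M i j + 1.
  move=> i j; have := Hin _ (gp_mid_in j hD hQ).
  move/(qp_simplex hQ) => [H0 _]; have := H0 i.
  rewrite mv_gp_mid HR; apply: div_ge0_inv; apply: Rmult_lt_0_compat; lra.
set r := fun i j => (M i j + 1 / dR d) / (dR d + 1).
have Hrs : forall i, sumI (fun k => r i k) = 1.
  move=> i; rewrite (sumI_ext (G := fun k => (1 / (dR d + 1)) * M i k + (1 / (dR d * (dR d + 1))) * 1));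
    last by move=> k; rewrite /r; field; lra.
  rewrite sumI_lin sumI_const INR_dd (_ : sumI (fun k => M i k) = 1); last exact: HR i.
  field; lra.
have Hst : stretched r = M.
  apply: functional_extensionality => i; apply: functional_extensionality => j.
  rewrite /stretched Hrs /r; field; lra.
exists r; split; [split|split; last by []].
- move=> i j; rewrite /r; apply: div_ge0; last lra.
  have := Hent i j.
  have -> : M i j + 1 / dR d = (dR d * M i j + 1) / dR d by field; lra.
  move=> h; apply: div_ge0; lra.
- move=> j; rewrite (sumI_ext (G := fun i => (1 / (dR d + 1)) * M i j + (1 / (dR d * (dR d + 1))) * 1));
    last by move=> i; rewrite /r; field; lra.
  rewrite sumI_lin sumI_const INR_dd (_ : sumI (fun i => M i j) = 1); last exact: HC j.
  field; lra.
- move=> u; split.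
  + move=> [q [Hq ->]]; have [_ Hs] := qp_simplex hQ Hq; rewrite K1 // Hst; exact: Hin.
  + move=> Hu; have [q [Hq ->]] := Hon u Hu; exists q; split => //.
    have [_ Hs] := qp_simplex hQ Hq; by rewrite K1 // Hst.
Qed.

Lemma crux d (Q : vec d -> Prop) r : (2 <= d)%nat -> qplex Q -> measurement r ->
  Q_preserving Q r ->
  (forall i, rowsum (stretched r) i = 1) /\ (forall j, colsum (stretched r) j = 1) /\
  (forall i j, -(1 / dR d) <= stretched r i j) /\
  mmul (stretched r) (mtr (stretched r)) = mid d /\
  (forall q, Q q -> Q (mv (stretched r) q)) /\
  (forall u, Q u -> exists q, Q q /\ u = mv (stretched r) q) /\
  (forall w, Q w -> Q (mv (mtr (stretched r)) w)).
Proof.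
move=> hd hQ hr hP; have hD := D_ge2 hd.
have HR : forall i, rowsum (stretched r) i = 1 by move=> i; exact: (pres_rowsum i hd hQ hr hP).
have HC : forall j, colsum (stretched r) j = 1 by move=> j; exact: (K2 j hD hr).
have Hin : forall q, Q q -> Q (mv (stretched r) q) by move=> q; exact: (pres_into hQ hP).
have Hon : forall u, Q u -> exists q, Q q /\ u = mv (stretched r) q by move=> u; exact: (pres_onto hQ hP).
do 6?split => //.
- by move=> i j; exact: (pres_entries i j hd hQ hr hP).
- exact: (orth_of hD hQ HR HC Hin Hon).
- exact: tr_into hD hQ HR Hin.
Qed.

Lemma mtrK d (M : mat d) : mtr (mtr M) = M.
Proof. by []. Qed.

Lemma st_rowsum d (S : mat d -> Prop) M : 2 <= dR d -> stochastic S -> S M ->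
  forall i, rowsum M i = 1.
Proof.
move=> hD [_ HS] HM i; have [_ Hc] := HS M HM; have := Hc i.
change (sumI (fun j => M i j * cvec d j)) with (mv M (cvec d) i).
rewrite mv_cvec /cvec => h.
have -> : rowsum M i = rowsum M i / (dR d * dR d) * (dR d * dR d) by field; lra.
rewrite h; field; lra.
Qed.

Lemma st_tr d (S : mat d -> Prop) M : stochastic S -> S M -> S (mtr M).
Proof. by move=> [[_ [_ [_ H]]] _] /H. Qed.

Lemma st_colsum d (S : mat d -> Prop) M : 2 <= dR d -> stochastic S -> S M ->
  forall j, colsum M j = 1.
Proof. move=> hD hS HM j; rewrite -rowsum_tr; exact: (st_rowsum hD hS (st_tr hS HM)). Qed.

Lemma st_orth d (S : mat d -> Prop) M : stochastic S -> S M -> mmul M (mtr M) = mid d.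
Proof. by move=> [[H _] _] /H. Qed.

Lemma st_orth' d (S : mat d -> Prop) M : stochastic S -> S M -> mmul (mtr M) M = mid d.
Proof. move=> hS HM; have := st_orth hS (st_tr hS HM); by rewrite mtrK. Qed.

Lemma st_mul d (S : mat d -> Prop) A B : stochastic S -> S A -> S B -> S (mmul A B).
Proof. by move=> [[_ [_ [H _]]] _]; apply: H. Qed.

Lemma vnorm_mv d (M : mat d) x : mmul (mtr M) M = mid d -> vnorm (mv M x) = vnorm x.
Proof.
move=> H; rewrite /vnorm; congr sqrt.
rewrite -{1}(mtrK M) inner_mv_tr mv_mmul H mv_mid; exact: inner_sym.
Qed.

Lemma mv_vsub d (M : mat d) u v : vsub (mv M u) (mv M v) = mv M (vsub u v).
Proof.
apply: functional_extensionality => i; rewrite /vsub /mv.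
rewrite (sumI_ext (F := fun j => M i j * (u j - v j)) (G := fun j => 1 * (M i j * u j) + (-1) * (M i j * v j)));
  last by move=> j; ring.
rewrite sumI_lin; ring.
Qed.

Lemma mv_comb d (M : mat d) k (w : 'I_k -> R) (x : 'I_k -> vec d) :
  mv M (fun i => sumI (fun t => w t * x t i)) = fun l => sumI (fun t => w t * mv M (x t) l).
Proof.
apply: functional_extensionality => l; rewrite /mv /sumI.
transitivity (\big[Rplus/0]_(j < d * d) \big[Rplus/0]_(t < k) (w t * (M l j * x t j))).
  apply: eq_bigr => j _; rewrite big_distrr /=; apply: eq_bigr => t _; ring.
rewrite exchange_big; apply: eq_bigr => t _; by rewrite big_distrr.
Qed.

Lemma st_maps d (S : mat d -> Prop) M : 2 <= dR d -> stochastic S -> S M ->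
  forall u, clconv (orbital_germ S) u -> clconv (orbital_germ S) (mv M u).
Proof.
move=> hD hS HM u Hu eps Heps.
have [v [[k [w [x [Hx [Hw ->]]]]] Hv]] := Hu eps Heps.
exists (mv M (fun i => sumI (fun t => w t * x t i))); split.
  exists k, w, (fun t => mv M (x t)); split; last by split => //; rewrite mv_comb.
  move=> t; have [Hw0 [N [i [HN Ex]]]] := Hx t; split => //.
  exists (mmul N (mtr M)), i; split; first exact: st_mul hS HN (st_tr hS HM).
  rewrite Ex; change (fun j => (dR d * N i j + 1) / (dR d * (dR d + 1))) with (gp N i).
  rewrite mv_gp //; exact: st_rowsum hD hS HM.
by rewrite mv_vsub vnorm_mv //; apply: st_orth' hS HM.
Qed.

Lemma S_sub_G d (S : mat d -> Prop) M : (2 <= d)%nat -> stochastic S ->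
  qplex (clconv (orbital_germ S)) -> S M -> pres_group (clconv (orbital_germ S)) M.
Proof.
move=> hd hS hQ HM; have hD := D_ge2 hd.
apply: inG => //.
- exact: st_rowsum hD hS HM.
- exact: st_colsum hD hS HM.
- by move=> q Hq; exact: (st_maps hD hS HM Hq).
- move=> u Hu; exists (mv (mtr M) u); split.
    exact: st_maps hD hS (st_tr hS HM) u Hu.
  by rewrite mv_mmul (st_orth hS HM) mv_mid.
Qed.

Definition toM (d : nat) (A : mat d) : 'M[R]_(d*d) := \matrix_(i, j) A i j.

Lemma toM_mul d (A B : mat d) : toM (mmul A B) = mulmx (toM A) (toM B).
Proof. apply/matrixP => i j; rewrite !mxE /mmul /sumI. apply: eq_bigr => k _. by rewrite !mxE. Qed.

Lemma mmul_inv d (A B : mat d) : mmul A B = mid d -> mmul B A = mid d.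
Proof.
move=> H.
have : mulmx (toM B) (toM A) = scalar_mx 1.
  apply: mulmx1C. rewrite -toM_mul H. apply/matrixP => i j; rewrite !mxE /mid.
  by case: (i == j).
move=> H2. apply: functional_extensionality => i; apply: functional_extensionality => j.
have := congr1 (fun M : 'M[R]_(d*d) => M i j) H2. rewrite -toM_mul !mxE /mid.
by case: (i == j).
Qed.

Lemma rowsum_mmul d (A B : mat d) i : (forall j, rowsum B j = 1) ->
  rowsum (mmul A B) i = rowsum A i.
Proof.
move=> H; rewrite /rowsum /mmul sumI_swap; apply: sumI_ext => j.
rewrite sumI_scal (_ : sumI (fun k => B j k) = 1); [ring| exact: H j].
Qed.

Lemma colsum_mmul d (A B : mat d) k : (forall j, colsum A j = 1) ->
  colsum (mmul A B) k = colsum B k.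
Proof.
move=> H; rewrite /colsum /mmul sumI_swap; apply: sumI_ext => j.
rewrite (sumI_ext (G := fun i => B j k * A i j)); last by move=> i; ring.
rewrite sumI_scal (_ : sumI (fun i => A i j) = 1); [ring| exact: H j].
Qed.

Lemma G_stochastic d (Q : vec d -> Prop) : (2 <= d)%nat -> qplex Q -> pres_group Q (mid d) ->
  stochastic (pres_group Q).
Proof.
move=> hd hQ Hid; have hD := D_ge2 hd.
split; first split.
- by move=> M [r [hr [hP ->]]]; have [_ [_ [_ [H _]]]] := crux hd hQ hr hP.
- split => //; split.
  + move=> A B [rA [hrA [hPA ->]]] [rB [hrB [hPB ->]]].
    have [RA [CA [_ [_ [IA [OA _]]]]]] := crux hd hQ hrA hPA.
    have [RB [CB [_ [_ [IB [OB _]]]]]] := crux hd hQ hrB hPB.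
    apply: inG => //.
    * by move=> i; rewrite rowsum_mmul.
    * by move=> j; rewrite colsum_mmul.
    * by move=> q Hq; rewrite -mv_mmul; apply: IA; apply: IB.
    * move=> u Hu; have [q1 [Hq1 ->]] := OA u Hu; have [q2 [Hq2 ->]] := OB q1 Hq1.
      by exists q2; rewrite mv_mmul.
  + move=> A [r [hr [hP ->]]].
    have [RA [CA [_ [OR [IA [OA TA]]]]]] := crux hd hQ hr hP.
    apply: inG => //.
    move=> u Hu; exists (mv (stretched r) u); split; first exact: IA.
    by rewrite mv_mmul (mmul_inv OR) mv_mid.
- move=> M [r [hr [hP ->]]]; have [RA [_ [EA _]]] := crux hd hQ hr hP; split.
  + by move=> i j; apply: Rle_ge.
  + move=> i; change (sumI (fun j => stretched r i j * cvec d j)) with (mv (stretched r) (cvec d) i).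
    by rewrite mv_cvec RA.
Qed.

Lemma coord_bound d (x : vec d) i : - vnorm x <= x i <= vnorm x.
Proof.
have H1 : x i * x i <= inner x x.
  rewrite /inner (sumI_D1 _ i).
  have : 0 <= sumI (fun j => if j == i then 0 else x j * x j).
    apply: sumI_ge0 => j; case: (j == i); [lra|nra].
  lra.
have H2 : vnorm x * vnorm x = inner x x by rewrite /vnorm sqrt_sqrt //; exact: inner_ge0.
have H3 : 0 <= vnorm x by rewrite /vnorm; apply: sqrt_pos.
split; nra.
Qed.

Lemma approx_le a b : (forall eps, eps > 0 -> a <= b + eps) -> a <= b.
Proof.
move=> H; case: (Rle_dec a b) => // /Rnot_le_lt h.
have := H ((a - b) / 2) ltac:(lra); lra.
Qed.

Lemma sumI_vsub n (u v : 'I_n -> R) : sumI (fun i => u i - v i) = sumI u - sumI v.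
Proof.
rewrite (sumI_ext (G := fun i => 1 * u i + (-1) * v i)); last by move=> i; ring.
rewrite sumI_lin; ring.
Qed.

Lemma polar_closure d (Q : vec d -> Prop) (P : vec d -> Prop) : 2 <= dR d -> qplex Q ->
  (forall v, P v -> polar Q v) -> forall u, Defs.closure P u -> polar Q u.
Proof.
move=> hD hQ HP u Hu.
have HDD : 0 < dR d * dR d by nra.
have Hs : forall eps, eps > 0 -> exists v, P v /\ sumI v - dR d * dR d * eps <= sumI u <= sumI v + dR d * dR d * eps
   /\ forall q, Q q -> inner v q - eps <= inner u q.
  move=> eps Heps; have [v [Pv Hv]] := Hu eps Heps; exists v; split => //.
  have Hb := coord_bound (vsub u v).
  have E := sumI_vsub u v.
  split.
    have L1 : sumI (vsub u v) <= sumI (fun _ : 'I_(d*d) => vnorm (vsub u v)).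
      by apply: sumI_le => i; have := Hb i; lra.
    have L2 : sumI (fun _ : 'I_(d*d) => - vnorm (vsub u v)) <= sumI (vsub u v).
      by apply: sumI_le => i; have := Hb i; lra.
    rewrite !sumI_const INR_dd in L1 L2.
    have E' : sumI (vsub u v) = sumI u - sumI v := E.
    rewrite E' in L1 L2. nra.
  move=> q Hq; have [Hq0 Hq1] := qp_simplex hQ Hq.
  have : sumI (fun i => (v i - u i) * q i) <= sumI (fun i => vnorm (vsub u v) * q i).
    apply: sumI_le => i; apply: Rmult_le_compat_r => //.
    have := Hb i; rewrite /vsub; lra.
  rewrite sumI_scal Hq1.
  rewrite (sumI_ext (F := fun i => (v i - u i) * q i) (G := fun i => 1 * (v i * q i) + (-1) * (u i * q i)));
    last by move=> i; ring.
  rewrite sumI_lin; rewrite /inner; lra.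
split.
- rewrite /Hplane; apply: Rle_antisym; apply: approx_le => eps Heps.
  + have [v [Pv [[H1 H2] _]]] := Hs (eps / (dR d * dR d)) ltac:(apply: Rdiv_lt_0_compat; lra).
    have [Hv _] := HP v Pv; rewrite /Hplane in Hv.
    have E2 : dR d * dR d * (eps / (dR d * dR d)) = eps by field; lra.
    rewrite E2 in H1 H2.
    lra.
  + have [v [Pv [[H1 H2] _]]] := Hs (eps / (dR d * dR d)) ltac:(apply: Rdiv_lt_0_compat; lra).
    have [Hv _] := HP v Pv; rewrite /Hplane in Hv.
    have E2 : dR d * dR d * (eps / (dR d * dR d)) = eps by field; lra.
    rewrite E2 in H1 H2.
    lra.
- move=> q Hq; apply: Rle_ge; apply: approx_le => eps Heps.
  have [v [Pv [_ H]]] := Hs eps Heps.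
  have [_ Hv] := HP v Pv; have := Rge_le _ _ (Hv q Hq); have := H q Hq; lra.
Qed.

Lemma polar_conv d (Q : vec d -> Prop) (P : vec d -> Prop) : qplex Q ->
  (forall v, P v -> polar Q v) -> forall u, Defs.conv P u -> polar Q u.
Proof.
move=> hQ HP u [k [w [x [Hx [Hw ->]]]]]; split.
- rewrite /Hplane sumI_swap -Hw; apply: sumI_ext => t.
  rewrite sumI_scal; have [_ H] := Hx t; have [-> _] := HP _ H; ring.
- move=> q Hq; apply: Rle_ge.
  have -> : inner (fun i => sumI (fun t => w t * x t i)) q = sumI (fun t => w t * inner (x t) q).
    transitivity (sumI (fun i => sumI (fun t => w t * (x t i * q i)))).
      apply: sumI_ext => i; rewrite /sumI big_distrl; apply: eq_bigr => t _ /=; ring.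
    rewrite sumI_swap; apply: sumI_ext => t; by rewrite sumI_scal.
  have : sumI (fun t => (1 / (dR d * (dR d + 1))) * w t) <= sumI (fun t => w t * inner (x t) q).
    apply: sumI_le => t; have [Hw0 H] := Hx t; have := Rge_le _ _ ((proj2 (HP _ H)) q Hq); nra.
  rewrite sumI_scal Hw; lra.
Qed.

Lemma germ_in d (S : mat d -> Prop) (Q : vec d -> Prop) : (2 <= d)%nat -> qplex Q ->
  (forall M, S M <-> pres_group Q M) -> forall v, orbital_germ S v -> polar Q v.
Proof.
move=> hd hQ hG v [M [i [HM ->]]]; have hD := D_ge2 hd.
have [r [hr [hP EM]]] := (proj1 (hG M)) HM.
have [RA [_ [_ [_ [IA _]]]]] := crux hd hQ hr hP.
rewrite -EM in RA IA.
change (fun j => (dR d * M i j + 1) / (dR d * (dR d + 1))) with (gp M i).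
split.
  by rewrite /Hplane sum_gp RA; field; lra.
move=> q Hq; apply: Rle_ge; rewrite inner_gp.
have [_ ->] := qp_simplex hQ Hq.
have [H0 _] := qp_simplex hQ (IA q Hq).
apply: div_mono; [nra|]. have := H0 i; nra.
Qed.

Theorem mainTheorem15 (d : nat) (hd : (2 <= d)%nat) (S : mat d -> Prop)
  (hS : strongly_maximal S) :
  let Q0 := clconv (orbital_germ S) in
  (qplex Q0 /\ (forall M, S M <-> pres_group Q0 M)) /\
  (forall Q : vec d -> Prop, qplex Q -> (forall M, S M <-> pres_group Q M) ->
     forall u, Q u <-> Q0 u).
Proof.
move=> Q0; have hD := D_ge2 hd.
have [[hSt hmax] hQ0] := hS.
have HSG : forall M, S M -> pres_group Q0 M by move=> M; exact: S_sub_G hd hSt hQ0.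
split; [split => // M; split|].
- exact: HSG.
- apply: hmax; last exact: HSG.
  apply: G_stochastic => //; apply: HSG.
  by have [[_ [H _]] _] := hSt.
- move=> Q hQ hG.
  have H0 : forall u, Q0 u -> Q u.
    have Hg := germ_in hd hQ hG.
    move=> u Hu; apply: (qp_of_polar hQ).
    apply: (polar_closure hD hQ _ Hu) => v Hv.
    exact: (polar_conv hQ Hg Hv).
  move=> u; split; last exact: H0.
  move=> Hu; apply: (qp_of_polar hQ0); have [Hp Hi] := qp_polar hQ Hu; split => //.
  by move=> v Hv; apply: Hi; apply: H0.
Qed.
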